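(* Let $N,k$ be positive integers, $p_1,\dots,p_N$ primes with all $p_i>3$, and $s_1,\dots,s_N$ positive integers. Then the group $\mathbb{Z}_{p_1^{s_1}\cdots p_N^{s_N}}\mathbin{\mathrm{wr}}\mathbb{Z}^k$ admits an automorphism with finite Reidemeister number.
   Context: $\mathbb{Z}_q\mathbin{\mathrm{wr}}\mathbb{Z}^k=\bigoplus_{x\in\mathbb{Z}^k}(\mathbb{Z}_q)_x\rtimes\mathbb{Z}^k$ is the restricted wreath product with $\mathbb{Z}^k$ acting by shifting indices. The Reidemeister number $R(\varphi)$ of an automorphism $\varphi$ of a group $G$ is the number of equivalence classes of the relation $g_1\sim hg_2\varphi(h^{-1})$, $h\in G$. *)

(* Defs.v *)
(* The restricted wreath product Z_q wr Z^k is modelled as the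
   set of pairs (f, a) with f : Z^k -> Z_q finitely supported and a in Z^k,
   inside the ambient type (Z^k -> Z_q) * Z^k, with the semidirect-product law
   (f, a) * (g, b) = (f + a.g, a + b), where (a.g)(x) = g(x - a) (shift). *)
From HB Require Import structures.
From mathcomp Require Import all_boot all_order all_algebra.
Set Implicit Arguments. Unset Strict Implicit. Unset Printing Implicit Defensive.
Import GRing.Theory.
Local Open Scope ring_scope.

Definition zvec (k : nat) := 'rV[int]_k.

Definition wr_elt (q k : nat) := ((zvec k -> 'Z_q) * zvec k)%type.

Definition fin_supp (q k : nat) (f : zvec k -> 'Z_q) : Prop :=
  exists s : seq (zvec k), forall x, x \notin s -> f x = 0.

Definition in_wr (q k : nat) (g : wr_elt q k) : Prop := fin_supp g.1.

Definition shift (q k : nat) (a : zvec k) (f : zvec k -> 'Z_q) : zvec k -> 'Z_q :=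
  fun x => f (x - a).

Definition wr_one (q k : nat) : wr_elt q k := (fun _ => 0, 0).

Definition wr_mul (q k : nat) (g h : wr_elt q k) : wr_elt q k :=
  (fun x => g.1 x + shift g.2 h.1 x, g.2 + h.2).

Definition wr_inv (q k : nat) (g : wr_elt q k) : wr_elt q k :=
  (fun x => - shift (- g.2) g.1 x, - g.2).

Definition is_wr_aut (q k : nat) (phi : wr_elt q k -> wr_elt q k) : Prop :=
  [/\ (forall g, in_wr g -> in_wr (phi g)),
      (forall g h, in_wr g -> in_wr h -> phi (wr_mul g h) = wr_mul (phi g) (phi h)),
      (forall g h, in_wr g -> in_wr h -> phi g = phi h -> g = h)
    & (forall h, in_wr h -> exists2 g, in_wr g & phi g = h)].

Definition twisted_conj (q k : nat) (phi : wr_elt q k -> wr_elt q k)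
  (g1 g2 : wr_elt q k) : Prop :=
  exists2 h, in_wr h & g1 = wr_mul (wr_mul h g2) (phi (wr_inv h)).

Definition finite_reidemeister (q k : nat) (phi : wr_elt q k -> wr_elt q k) : Prop :=
  exists (n : nat) (r : 'I_n -> wr_elt q k),
    (forall i, in_wr (r i)) /\
    (forall g, in_wr g -> exists i, twisted_conj phi g (r i)).

(* Main.v *)
Require Import Defs.
From mathcomp Require Import all_boot all_order all_algebra.
From mathcomp Require Import zify ring.
From Stdlib Require Import FunctionalExtensionality.
Set Implicit Arguments. Unset Strict Implicit. Unset Printing Implicit Defensive.
Import GRing.Theory Num.Theory.

Section Main.
Local Open Scope ring_scope.

Variables (q k : nat).
Hypothesis q_gt1 : (1 < q)%N.
Hypothesis u2 : (2%:R : 'Z_q) \is a GRing.unit.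
Hypothesis u3 : (3%:R : 'Z_q) \is a GRing.unit.

Definition phi0 (g : wr_elt q k) : wr_elt q k := (fun x => 2%:R * g.1 (- x), - g.2).

Lemma vec_id1 (x a : zvec k) : - (x - - a) = - x - a.
Proof. by rewrite opprB addrC. Qed.

Lemma phi0_aut : is_wr_aut phi0.
Proof.
split.
- move=> [f a] [s /= Hs]; exists (map -%R s) => x Hx /=.
  rewrite Hs ?mulr0 //; apply: contra Hx => Hm.
  by apply/mapP; exists (- x); rewrite ?opprK.
- move=> [f a] [g b] _ _; rewrite /phi0 /wr_mul /shift /=.
  congr (_, _); last by rewrite opprD.
  by apply: functional_extensionality => x; rewrite mulrDr vec_id1.
- move=> [f a] [g b] _ _ [Hf Ha]; congr (_, _); last exact: oppr_inj.
  apply: functional_extensionality => x.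
  have := f_equal (fun F => F (- x)) Hf => /= /(mulrI u2).
  by rewrite opprK.
- move=> [f a] [s /= Hs].
  exists ((fun x => (2%:R)^-1 * f (- x)), - a).
    exists (map -%R s) => x Hx /=.
    rewrite Hs ?mulr0 //; apply: contra Hx => Hm.
    by apply/mapP; exists (- x); rewrite ?opprK.
  rewrite /phi0 /=; congr (_, _); last by rewrite opprK.
  apply: functional_extensionality => x.
  by rewrite opprK mulrA mulrV // mul1r.
Qed.

Lemma vec_id2 (x b e : zvec k) : - (x - (b + e)) - - b = b + e + b - x.
Proof. by rewrite opprB opprK addrAC. Qed.

Lemma phi0_reid : finite_reidemeister phi0.
Proof.
pose T := {ffun 'I_k -> bool}.
exists #|T|.
exists (fun i => ((fun _ => 0), \row_j (nat_of_bool ((enum_val i : T) j))%:Z)).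
split; first by move=> i; exists [::].
move=> [f a] [s /= Hs].
pose b : zvec k := \row_j ((a ord0 j) %/ 2)%Z.
pose e : zvec k := \row_j ((a ord0 j) %% 2)%Z.
have Ha : a = b + e + b.
  apply/rowP => j; rewrite !mxE.
  rewrite {1}(divz_eq (a ord0 j) 2).
  move: (a ord0 j %/ 2)%Z (a ord0 j %% 2)%Z => m n; lia.
pose t : T := [ffun j => (a ord0 j %% 2)%Z != 0].
exists (enum_rank t); rewrite enum_rankK.
have -> : \row_j (nat_of_bool (t j))%:Z = e.
  apply/rowP => j; rewrite !mxE ffunE.
  have h0 := @modz_ge0 (a ord0 j) 2 isT.
  have h1 := @ltz_pmod (a ord0 j) 2 isT.
  move: h0 h1; move: (a ord0 j %% 2)%Z => v h0 h1.
  have [->|->] : v = 0 \/ v = 1 by lia.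
    by [].
  by [].
pose w : 'Z_q := - (3%:R)^-1.
have Hw : w * 3%:R = -1 by rewrite /w mulNr mulVr.
pose u := fun x => w * (f x + 2%:R * f (a - x)).
exists (u, b).
  exists (s ++ map (fun y => a - y) s) => x Hx.
  rewrite mem_cat negb_or in Hx; case/andP: Hx => H1 H2.
  rewrite /= /u Hs // Hs ?mulr0 ?addr0 ?mulr0 //.
  apply: contra H2 => Hm; apply/mapP; exists (a - x) => //.
  by rewrite subKr.
rewrite /wr_mul /wr_inv /phi0 /shift /=.
congr (_, _); last by rewrite opprK -Ha.
apply: functional_extensionality => x /=.
rewrite addr0 vec_id2 -Ha /u subKr.
move: (f x) (f (a - x)) => y z.
have -> : w * (y + 2%:R * z) + 2%:R * - (w * (z + 2%:R * y)) = - (w * 3%:R) * y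
  by ring.
by rewrite Hw opprK mul1r.
Qed.

End Main.

Lemma coprime_small (N : nat) (p s : 'I_N -> nat) m :
  prime m -> (m <= 3)%N -> (forall i, prime (p i) /\ (3 < p i)%N) ->
  coprime (\prod_(i < N) p i ^ s i)%N m.
Proof.
move=> pm m3 Hp; rewrite coprime_sym.
apply: (big_ind (fun x => coprime m x)); first exact: coprimen1.
  by move=> x y; rewrite coprimeMr => -> ->.
move=> i _; apply: coprimeXr.
have [pi ip] := Hp i.
rewrite prime_coprime // dvdn_prime2 //.
apply/eqP => E; move: ip; rewrite -E; lia.
Qed.

Theorem proposition4p5 (N k : nat) (p s : 'I_N -> nat) :
  (0 < N)%N -> (0 < k)%N ->
  (forall i, prime (p i) /\ (3 < p i)%N) ->
  (forall i, (0 < s i)%N) ->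
  exists phi : wr_elt (\prod_(i < N) p i ^ s i)%N k ->
               wr_elt (\prod_(i < N) p i ^ s i)%N k,
    is_wr_aut phi /\ finite_reidemeister phi.
Proof.
move=> N0 _ Hp Hs.
have q1 : (1 < \prod_(i < N) p i ^ s i)%N.
  pose i0 := Ordinal N0.
  rewrite (bigD1 i0) //=.
  have h2 : (0 < \prod_(i < N | i != i0) p i ^ s i)%N.
    by apply: prodn_gt0 => i; rewrite expn_gt0; case: (Hp i) => /prime_gt0 ->.
  have [_ ip] := Hp i0.
  have h1 : (1 < p i0 ^ s i0)%N.
    have := @ltn_expl (p i0) (s i0); have := Hs i0; move: (p i0 ^ s i0)%N (s i0) (p i0) ip => x y w ip; lia.
  move: (p i0 ^ s i0)%N (\prod_(_ < _ | _) _)%N h1 h2 => x z; nia.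
have U2 := unitZpE 2 q1; have U3 := unitZpE 3 q1.
rewrite coprime_small // in U2; rewrite coprime_small // in U3.
exists (@phi0 _ k); split.
  by apply: phi0_aut.
by apply: phi0_reid.
Qed.
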